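(* Let $G$ be a connected graph on $n\ge2$ vertices with transmissions $\mathbb{D}_1\ge\mathbb{D}_2\ge\cdots\ge\mathbb{D}_n$ and diameter $d$. Then for $1\le i\le n$, \[\rho(\mathbb{D}(G))\le \frac{\mathbb{D}_i-d+\sqrt{(\mathbb{D}_i+d)^2+4d\sum_{k=1}^{i-1}(\mathbb{D}_k-\mathbb{D}_i)}}{2},\] with equality if and only if $\mathbb{D}_1=\mathbb{D}_2=\cdots=\mathbb{D}_n$.
   Context: $\mathbb{D}(G)=(d_{ij})$ is the distance matrix of $G$; the transmission of $v_i$ is $\mathbb{D}_i=\sum_j d_{ij}$; $\rho$ is the spectral radius. An empty sum equals $0$. *)

(* Defs.v *)
From HB Require Import structures.
From mathcomp Require Import all_boot all_order all_algebra all_field.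
From Stdlib Require Import ClassicalEpsilon.
Set Implicit Arguments. Unset Strict Implicit. Unset Printing Implicit Defensive.
Import Order.TTheory GRing.Theory Num.Theory.

Definition simple_graph (n : nat) (e : rel 'I_n) : Prop :=
  irreflexive e /\ symmetric e.

Definition connected_graph (n : nat) (e : rel 'I_n) : Prop :=
  forall x y : 'I_n, connect e x y.

Definition walk_of_length (n : nat) (e : rel 'I_n) (k : nat) (x y : 'I_n) : bool :=
  [exists p : k.-tuple 'I_n, path e x p && (last x p == y)].

(* graph distance: least k with a walk of length k (any shortest walk has
   length < n in a connected graph; value n if y unreachable). *)
Definition gdist (n : nat) (e : rel 'I_n) (x y : 'I_n) : nat :=
  find (fun k => walk_of_length e k x y) (iota 0 n).

Definition diameter (n : nat) (e : rel 'I_n) : nat :=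
  \max_(x : 'I_n) \max_(y : 'I_n) gdist e x y.

Definition transmission (n : nat) (e : rel 'I_n) (x : 'I_n) : nat :=
  \sum_(y : 'I_n) gdist e x y.

Local Open Scope ring_scope.

Definition dist_matrix (n : nat) (e : rel 'I_n) : 'M[algC]_n :=
  \matrix_(i, j) (gdist e i j)%:R.

Definition is_spectral_radius (n : nat) (A : 'M[algC]_n) (r : algC) : Prop :=
  (exists2 l : algC, eigenvalue A l & r = `|l|) /\
  (forall m : algC, eigenvalue A m -> `|m| <= r).

Definition spectral_radius (n : nat) (A : 'M[algC]_n) : algC :=
  epsilon (inhabits 0) (fun r => is_spectral_radius A r).

(* Main.v *)
Require Import Defs.
From HB Require Import structures.
From mathcomp Require Import all_boot all_order all_algebra all_field.
From mathcomp Require Import ring lra.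
From Stdlib Require Import ClassicalEpsilon.
Import Order.TTheory GRing.Theory Num.Theory.
Local Open Scope ring_scope.

Lemma list_max (T : eqType) (s : seq T) (f : T -> algC) (x0 : T) :
  x0 \in s -> (forall x, f x \is Num.real) ->
  exists2 z, z \in s & forall w, w \in s -> f w <= f z.
Proof.
move=> hx0 fR; elim: s x0 hx0 => [|a s IH] // x0 _.
case: s IH => [|b s] IH.
  by exists a => [|w]; rewrite ?mem_seq1 ?mem_head // => /eqP ->.
have [z zin zmax] := IH b (mem_head b s).
case/orP: (real_leVge (fR a) (fR z)) => h.
  exists z; first by rewrite in_cons zin orbT.
  by move=> w; rewrite in_cons => /orP [/eqP ->|/zmax].
exists a; first exact: mem_head.
move=> w; rewrite in_cons => /orP [/eqP ->//|/zmax hw].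
exact: le_trans hw h.
Qed.

Lemma sr_exists (n : nat) (A : 'M[algC]_n) : (0 < n)%N -> exists r, is_spectral_radius A r.
Proof.
move=> n0.
have [r hr] := closed_field_poly_normal (char_poly A).
have ein : forall a, eigenvalue A a -> a \in r.
  move=> a; rewrite eigenvalue_root_char hr (eqP (char_poly_monic A)) scale1r.
  by rewrite root_prod_XsubC.
have [a0 ha0] := eigenvalue_closed A n0.
have [z zin zmax] := @list_max _ r (fun x => `|x|) _ (ein _ ha0) (fun x => normr_real x).
exists `|z|; split.
  exists z => //.
  by rewrite eigenvalue_root_char hr (eqP (char_poly_monic A)) scale1r root_prod_XsubC.
by move=> m /ein /zmax.
Qed.

Lemma sr_spec (n : nat) (A : 'M[algC]_n) : (0 < n)%N -> is_spectral_radius A (spectral_radius A).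
Proof.
move=> n0; rewrite /spectral_radius.
exact: (epsilon_spec _ _ (sr_exists _ A n0)).
Qed.

Lemma arith (R : realFieldType) (rho Di d S T q : R) :
 0 < d -> 0 <= S -> 0 <= rho -> 0 <= Di -> 1 <= T ->
 rho * T <= Di * T + S -> rho <= d * (T - 1) -> 0 <= q -> q^+2 = (Di+d)^+2 + 4*d*S ->
 rho <= (Di - d + q) / 2 /\ (rho = (Di - d + q) / 2 -> (S = 0 /\ rho = Di) \/
    (Di < rho /\ rho = d*(T-1) /\ rho * T = Di*T + S)).
Proof.
move=> d0 S0 r0 D0 T1 h1 h2 q0 hq.
have hq2 : (Di + d) <= q by nra.
case: (lerP rho Di) => hr.
  split; first lra.
  move=> eq; left.
  have {}eq : 2*rho + d - Di = q by lra.
  have e1 : rho = Di by lra.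
  have e2 : q = Di + d by lra.
  split=> //. rewrite e2 in hq. nra.
have a1 : (rho - Di) * T <= S by lra.
have a2 : rho + d <= d * T by lra.
have a3 : (rho - Di) * (rho + d) <= d * S by nra.
have a4 : (2*rho + d - Di)^+2 <= q^+2 by nra.
have a4' : 2*rho + d - Di <= q by nra.
split; first lra.
move=> eq; right.
have {}eq : 2*rho + d - Di = q by lra.
have a5 : (rho - Di) * (rho + d) = d * S by nra.
have a6 : rho + d = d * T by nra.
split=> //; split; nra.
Qed.

Lemma arithC (rho Di d S T q : algC) :
 rho \is Creal -> Di \is Creal -> d \is Creal -> S \is Creal -> T \is Creal -> q \is Creal ->
 0 < d -> 0 <= S -> 0 <= rho -> 0 <= Di -> 1 <= T ->
 rho * T <= Di * T + S -> rho <= d * (T - 1) -> 0 <= q -> q^+2 = (Di+d)^+2 + 4*d*S ->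
 rho <= (Di - d + q) / 2 /\ (rho = (Di - d + q) / 2 -> (S = 0 /\ rho = Di) \/
    (Di < rho /\ rho = d*(T-1) /\ rho * T = Di*T + S)).
Proof.
move=> rR DR dR SR TR qR d0 S0 r0 D0 T1 h1 h2 q0 hq.
have := @arith algR (in_algR rR) (in_algR DR) (in_algR dR) (in_algR SR) (in_algR TR) (in_algR qR).
move=> /(_ d0 S0 r0 D0 T1 h1 h2 q0).
have hq' : in_algR qR ^+ 2 = (in_algR DR + in_algR dR) ^+ 2 + 4 * in_algR dR * in_algR SR.
  by apply: val_inj; exact: hq.
move=> /(_ hq') [c1 c2]; split; first exact: c1.
move=> e; have e' : in_algR rR = (in_algR DR - in_algR dR + in_algR qR) / 2 by apply: val_inj; exact: e.
case: (c2 e') => [[s1 s2]|[s1 [s2 s3]]]; [left|right].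
  by split; [move/(congr1 val): s1 | move/(congr1 val): s2].
split; first exact: s1.
by split; [move/(congr1 val): s2 | move/(congr1 val): s3].
Qed.

Lemma gdist_le_walk (n : nat) (e : rel 'I_n) k x y :
  (k < n)%N -> walk_of_length e k x y -> (gdist e x y <= k)%N.
Proof.
move=> kn hw; rewrite /gdist; case: leqP => // lt.
have := before_find 0%N lt; rewrite nth_iota // add0n hw //.
Qed.

Lemma gdist_refl (n : nat) (e : rel 'I_n) x : gdist e x x = 0%N.
Proof.
apply/eqP; rewrite -leqn0; apply: gdist_le_walk; first exact: (leq_ltn_trans (leq0n x) (ltn_ord x)).
by apply/existsP; exists [tuple]; rewrite /=.
Qed.

Lemma gdist_pos (n : nat) (e : rel 'I_n) x y : x != y -> (0 < gdist e x y)%N.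
Proof.
move=> xy; rewrite lt0n; apply/eqP => h.
have hn : (0 < n)%N := leq_ltn_trans (leq0n x) (ltn_ord x).
have : has (fun k => walk_of_length e k x y) (iota 0 n).
  by rewrite has_find size_iota -/(gdist e x y) h.
move/(nth_find 0%N); rewrite -/(gdist e x y) h nth_iota //.
move=> /existsP [p /andP [_ hl]].
move: hl; rewrite (size0nil (size_tuple p)) /=. by move/eqP=> h0; rewrite h0 eqxx in xy.
Qed.

Lemma gdist_le_diam (n : nat) (e : rel 'I_n) x y : (gdist e x y <= diameter e)%N.
Proof.
rewrite /diameter; apply: (leq_trans _ (leq_bigmax x)).
exact: (leq_bigmax (F := fun y => gdist e x y) y).
Qed.

Lemma walk_sym (n : nat) (e : rel 'I_n) k x y : simple_graph e ->
  walk_of_length e k x y -> walk_of_length e k y x.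
Proof.
case=> irr sym.
move=> /existsP [p /andP [hp /eqP hl]].
apply/existsP.
have sz : size (rev (belast x p)) == k by rewrite size_rev size_belast size_tuple.
exists (Tuple sz) => /=; apply/andP; split.
  rewrite -hl rev_path.
  have E : (fun z => e^~ z) =2 e by move=> a b /=; rewrite sym.
  by rewrite (eq_path E).
move: hl; case: (tval p) => [|a s] /= <-; first by [].
by rewrite rev_cons last_rcons.
Qed.

Lemma gdist_sym (n : nat) (e : rel 'I_n) x y : simple_graph e -> gdist e x y = gdist e y x.
Proof.
move=> sg; rewrite /gdist; apply: eq_find => k.
by apply/idP/idP; apply: walk_sym.
Qed.

Lemma neighbor (n : nat) (e : rel 'I_n) p : (2 <= n)%N -> simple_graph e -> connected_graph e ->
  exists2 r, r != p & (gdist e p r <= 1)%N.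
Proof.
move=> n2 [irr sym] conn.
have [q qp] : exists q : 'I_n, q != p.
  have n0 : (0 < n)%N by apply: ltn_trans n2.
  case: (eqVneq p (Ordinal n0)) => h.
    by exists (Ordinal n2); rewrite h.
  by exists (Ordinal n0); rewrite eq_sym.
have /connectP [s hs hl] := conn p q.
case: s hs hl => [|r s] /=.
  by move=> _ hq; rewrite hq eqxx in qp.
move=> /andP [epr _] _.
exists r.
  by apply: contraTneq epr => ->; rewrite irr.
apply: gdist_le_walk => //.
by apply/existsP; exists [tuple r]; rewrite /= epr eqxx.
Qed.

Lemma key (n : nat) (e : rel 'I_n) (i : 'I_n) (m : algC) :
  (2 <= n)%N -> simple_graph e -> connected_graph e ->
  (forall i j : 'I_n, (i <= j)%N -> (transmission e j <= transmission e i)%N) ->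
  eigenvalue (dist_matrix e) m ->
  let Di : algC := (transmission e i)%:R in
  let d : algC := (diameter e)%:R in
  let bound : algC := (Di - d + sqrtC ((Di + d) ^+ 2 + 4 * d *
          \sum_(k < n | (k < i)%N) ((transmission e k)%:R - Di))) / 2 in
  `|m| <= bound /\ (`|m| = bound -> forall j k : 'I_n, transmission e j = transmission e k).
Proof.
move=> n2 sg conn mono /eigenvalueP [v hv v0] Di d bound.
pose G := fun j k : 'I_n => (gdist e j k)%:R : algC.
have n0 : (0 < n)%N by apply: ltn_trans n2.
have hvk : forall k, \sum_j v 0 j * G j k = m * v 0 k.
  move=> k; have := congr1 (fun M : 'M[algC]_(1,n) => M 0 k) hv; rewrite !mxE => <-.
  by apply: eq_bigr => j _; rewrite mxE.
have [p _ pmax'] := @list_max _ (enum 'I_n) (fun k => `|v 0 k|) (Ordinal n0) (mem_enum _ _) (fun k => normr_real _).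
have pmax : forall k, `|v 0 k| <= `|v 0 p| by move=> k; apply: pmax'; rewrite mem_enum.
have c0 : 0 < `|v 0 p|.
  rewrite lt_def normr_ge0 andbT normr_eq0; apply: contraNneq v0 => h.
  apply/eqP/rowP => k; rewrite mxE; apply/eqP; rewrite -normr_eq0 eq_le normr_ge0 andbT.
  by rewrite -(normr0 algC) -h; apply: pmax.
set c := `|v 0 p| in c0 pmax.
pose w k := `|v 0 k| / c.
have w0 : forall k, 0 <= w k by move=> k; rewrite /w divr_ge0 // ltW.
have w1 : forall k, w k <= 1 by move=> k; rewrite /w ler_pdivrMr // mul1r.
have wp : w p = 1 by rewrite /w divff // gt_eqF.
have wR : forall k, w k \is Num.real by move=> k; apply: ger0_real.
have GR : forall j k, 0 <= G j k by move=> j k; apply: ler0n.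
have hE : forall k, `|m| * w k <= \sum_j w j * G j k.
  move=> k.
  have -> : \sum_j w j * G j k = (\sum_j `|v 0 j| * G j k) / c.
    by rewrite mulr_suml; apply: eq_bigr => j _; rewrite /w mulrAC.
  rewrite /w mulrA -normrM -hvk; apply: ler_wpM2r; first by rewrite invr_ge0 ltW.
  apply: le_trans (ler_norm_sum _ _ _) _; apply: ler_sum => j _.
  by rewrite normrM normr_nat.
pose T := \sum_k w k.
pose Dt := fun k : 'I_n => (transmission e k)%:R : algC.
have Dt_row : forall j, Dt j = \sum_k G j k by move=> j; rewrite /Dt /transmission natr_sum.
have Dt_col : forall k, Dt k = \sum_j G j k.
  by move=> k; rewrite /Dt /transmission natr_sum; apply: eq_bigr => j _; rewrite /G gdist_sym.
pose X := \sum_k \sum_j w j * G j k.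
have h1a : `|m| * T <= X by rewrite /T mulr_sumr; apply: ler_sum => k _; apply: hE.
have h1b : X = \sum_j w j * Dt j.
  rewrite /X exchange_big /=; apply: eq_bigr => j _.
  by rewrite Dt_row mulr_sumr.
pose S := \sum_(k < n | (k < i)%N) (Dt k - Di).
have monoC : forall a b : 'I_n, (a <= b)%N -> Dt b <= Dt a by move=> a b ab; rewrite ler_nat mono.
have h2 : \sum_j w j * Dt j <= Di * T + S.
  have -> : \sum_j w j * Dt j = Di * T + \sum_j w j * (Dt j - Di).
    rewrite /T mulr_sumr -big_split /=; apply: eq_bigr => j _; ring.
  rewrite lerD2l (bigID (fun j : 'I_n => (j < i)%N)) /= -[S]addr0.
  apply: lerD.
    apply: ler_sum => j hj.
    have hD : 0 <= Dt j - Di by rewrite subr_ge0; apply: monoC; apply: ltnW.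
    by rewrite ler_piMl.
  apply: sumr_le0 => j hj.
  have hD : Dt j - Di <= 0 by rewrite subr_le0; apply: monoC; rewrite leqNgt.
  by rewrite mulr_ge0_le0.
have Trest : T - 1 = \sum_(j | j != p) w j.
  by rewrite /T (bigD1 p) //= wp addrC addrK.
have Gpp : G p p = 0 by rewrite /G gdist_refl.
have Gd : forall j k, G j k <= d by move=> j k; rewrite ler_nat gdist_le_diam.
have h3a : `|m| <= \sum_(j | j != p) w j * G j p.
  have := hE p; rewrite wp mulr1 (bigD1 p) //= Gpp mulr0 add0r //.
have h3b : \sum_(j | j != p) w j * G j p <= d * (T - 1).
  rewrite Trest mulr_sumr; apply: ler_sum => j _; rewrite mulrC; apply: ler_wpM2r => //.
have h3 : `|m| <= d * (T - 1) := le_trans h3a h3b.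
have x0 : Ordinal n0 != Ordinal n2 :> 'I_n by [].
have d0 : 0 < d.
  by rewrite ltr0n; exact: leq_trans (gdist_pos _ e _ _ x0) (gdist_le_diam _ e _ _).
have S0 : 0 <= S by apply: sumr_ge0 => k hk; rewrite subr_ge0; apply: monoC; apply: ltnW.
have T1 : 1 <= T by rewrite -subr_ge0 Trest; apply: sumr_ge0.
have DiR : Di \is Num.real by apply: realn.
have dR : d \is Num.real by apply: realn.
have SR : S \is Num.real by apply: ger0_real.
have TR : T \is Num.real by apply: ger0_real; apply: le_trans T1.
pose q := sqrtC ((Di + d) ^+ 2 + 4 * d * S).
have q0 : 0 <= q by rewrite sqrtC_ge0 addr_ge0 // ?exprn_ge0 ?addr_ge0 ?ler0n // mulr_ge0 // mulr_ge0 // ler0n.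
have qR : q \is Num.real by apply: ger0_real.
have hq : q ^+ 2 = (Di + d) ^+ 2 + 4 * d * S by rewrite sqrtCK.
have h12 : `|m| * T <= Di * T + S by rewrite (le_trans h1a) // h1b.
have [c1 c2] := arithC _ _ _ _ _ _ (normr_real m) DiR dR SR TR qR d0 S0 (normr_ge0 m) (ler0n _ _) T1
   h12 h3 q0 hq.
split; first exact: c1.
move=> /c2 [[S00 mDi]|[Dim [md mT]]].
  have hSk : forall k : 'I_n, (k < i)%N -> Dt k = Di.
    move=> kk hk; apply/eqP; rewrite -subr_eq0; apply/eqP.
    apply: (psumr_eq0P _ S00 hk) => a ha; rewrite subr_ge0; apply: monoC; exact: ltnW.
  have Dmax : forall k, Dt k <= Di.
    move=> kk; case: (ltnP kk i) => hk; first by rewrite hSk.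
    exact: monoC.
  have hp1 : `|m| <= \sum_j w j * G j p by have := hE p; rewrite wp mulr1.
  have hp2 : \sum_j w j * G j p <= \sum_j G j p by apply: ler_sum => j _; rewrite ler_piMl.
  have hp3 : \sum_j G j p = `|m|.
    apply: le_anti; rewrite (le_trans hp1 hp2) andbT -Dt_col mDi; exact: Dmax.
  have hp4 : \sum_j (G j p - w j * G j p) = 0.
    rewrite sumrB; apply/eqP; rewrite subr_eq0; apply/eqP/le_anti.
    by rewrite hp2 /= hp3 hp1.
  have wall : forall j, w j = 1.
    move=> j; case: (eqVneq j p) => [->//|jp].
    have hnn : forall a, xpredT a -> 0 <= G a p - w a * G a p.
      by move=> a _; rewrite subr_ge0 ler_piMl.
    have := psumr_eq0P hnn hp4 (i := j) isT.
    have Gpos : G j p != 0 by rewrite /G pnatr_eq0 -lt0n gdist_pos.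
    move/eqP; rewrite -{1}[G j p]mul1r -mulrBl mulf_eq0 (negbTE Gpos) orbF subr_eq0.
    by move/eqP <-.
  have hDk : forall k, Dt k = Di.
    move=> kk; apply: le_anti; rewrite Dmax /= -mDi.
    have := hE kk; rewrite wall mulr1 Dt_col.
    by under eq_bigr do rewrite wall mul1r.
  move=> a b; apply/eqP; rewrite -(eqr_nat algC).
  by rewrite -/(Dt a) -/(Dt b) !hDk.
have hX : X = `|m| * T by apply: le_anti; rewrite h1a andbT h1b mT h2.
have eig : forall k, `|m| * w k = \sum_j w j * G j k.
  have hnn : forall k, xpredT k -> 0 <= \sum_j w j * G j k - `|m| * w k.
    by move=> k _; rewrite subr_ge0 hE.
  have hs : \sum_k (\sum_j w j * G j k - `|m| * w k) = 0.
    by rewrite sumrB -mulr_sumr -/X -/T hX subrr.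
  move=> k; have := psumr_eq0P hnn hs (i := k) isT.
  by move/eqP; rewrite subr_eq0 => /eqP ->.
have m0 : 0 < `|m| by apply: le_lt_trans Dim; apply: ler0n.
have wpos : forall k, k != p -> 0 < w k.
  move=> k kp.
  have Gpk : 0 < G p k by rewrite /G ltr0n gdist_pos // eq_sym.
  have : 0 < `|m| * w k.
    rewrite eig (bigD1 p) //= wp mul1r; apply: (lt_le_trans Gpk).
    by rewrite lerDl; apply: sumr_ge0 => j _; apply: mulr_ge0.
  by rewrite pmulr_rgt0.
have hs3 : \sum_(j | j != p) (d * w j - w j * G j p) = 0.
  rewrite sumrB -mulr_sumr -Trest; apply/eqP; rewrite subr_eq0; apply/eqP.
  by apply: le_anti; rewrite h3b -md h3a.
have Gdp : forall j, j != p -> gdist e j p = diameter e.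
  move=> j jp.
  have hnn : forall a, a != p -> 0 <= d * w a - w a * G a p.
    by move=> a _; rewrite subr_ge0 [d * _]mulrC; apply: ler_wpM2l.
  have := psumr_eq0P hnn hs3 jp.
  rewrite mulrC -mulrBr => /eqP; rewrite mulf_eq0 (gt_eqF (wpos _ jp)) /= subr_eq0.
  by rewrite eq_sym eqr_nat => /eqP.
have [r rp hpr] := neighbor n e p n2 sg conn.
have diam1 : (diameter e <= 1)%N by rewrite -(Gdp r rp) gdist_sym.
have gall : forall x y, gdist e x y = (x != y) :> nat.
  move=> x y; case: (eqVneq x y) => [->|xy]; first by rewrite gdist_refl.
  by apply/eqP; rewrite eqn_leq gdist_pos // (leq_trans (gdist_le_diam _ _ _ _) diam1).
have tr : forall x, transmission e x = n.-1.
  move=> x; rewrite /transmission (bigD1 x) //= gdist_refl add0n.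
  rewrite (eq_bigr (fun _ => 1%N)); last by move=> y yx; rewrite gall eq_sym yx.
  by rewrite sum_nat_const cardC1 card_ord muln1.
by move=> a b; rewrite !tr.
Qed.

Theorem corollary6 (n : nat) (e : rel 'I_n) :
  (2 <= n)%N -> simple_graph e -> connected_graph e ->
  (forall i j : 'I_n, (i <= j)%N -> (transmission e j <= transmission e i)%N) ->
  forall i : 'I_n,
    let Di : algC := (transmission e i)%:R in
    let d : algC := (diameter e)%:R in
    let bound : algC :=
      (Di - d + sqrtC ((Di + d) ^+ 2 + 4 * d *
          \sum_(k < n | (k < i)%N) ((transmission e k)%:R - Di))) / 2 in
    spectral_radius (dist_matrix e) <= bound /\
    (spectral_radius (dist_matrix e) = bound <->
       (forall j k : 'I_n, transmission e j = transmission e k)).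
Proof.
move=> n2 sg conn mono i Di d bound.
have n0 : (0 < n)%N by apply: ltn_trans n2.
have [[l hl hrl] hmax] := sr_spec _ (dist_matrix e) n0.
have [k1 k2] := key n e i l n2 sg conn mono hl.
rewrite hrl; split; first exact: k1.
split; first exact: k2.
move=> reg.
have hb : bound = Di.
  rewrite /bound big1; last by move=> k _; rewrite (reg k i) subrr.
  rewrite mulr0 addr0 sqrCK; last by rewrite addr_ge0 // ler0n.
  by field.
rewrite hb; apply: le_anti; rewrite -hb k1 hb /=.
have : eigenvalue (dist_matrix e) Di.
  apply/eigenvalueP; exists (const_mx 1).
    apply/rowP => k; rewrite !mxE.
    rewrite (eq_bigr (fun j => (gdist e k j)%:R)); last first.
      by move=> j _; rewrite !mxE mul1r gdist_sym.
    by rewrite -natr_sum mulr1 /Di (reg i k).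
  apply/negP => /eqP /rowP /(_ (Ordinal n0)); rewrite !mxE => /eqP.
  by rewrite oner_eq0.
by move/hmax; rewrite -hrl /Di normr_nat.
Qed.
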